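(* Fix $\gamma>0$ and a realisation of the training data. Let $\mathcal A_n$ be any maximal subset of $[n]$ such that the vectors $(\|1_{\mathcal X}\|_{\mathcal H}^2,1,\ldots,1)^\top\in\mathbb R^{n+1}$ and $(1,k(X_i,X_1),\ldots,k(X_i,X_n))^\top\in\mathbb R^{n+1}$, $i\in\mathcal A_n$, are linearly independent. Let $\bar k(y)=\frac1n\sum_{i=1}^nk(X_i,y)$, $\tilde k(x,y)=k(x,y)-\bar k(y)$, and for $\beta\in\mathbb R^{\mathcal A_n}$ let $f_\beta(x)=\sum_{i\in\mathcal A_n}\tilde k(x,X_i)\beta_i$. Then $\beta\mapsto\ell_{n,\gamma}(f_\beta)$ is strongly convex on $\mathbb R^{\mathcal A_n}$, and writing $\hat\beta$ for its unique minimiser, $f_{\hat\beta}$ is the unique minimiser of $f\mapsto\ell_{n,\gamma}(f)$ over $f\in\mathcal H$.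
   Context: Let $\mathcal X$ be a locally compact metric space in which every open set is $\sigma$-compact. Let $k:\mathcal X\times\mathcal X\to\mathbb R$ be a continuous, symmetric, positive semidefinite kernel with RKHS $\mathcal H$, and assume $k-\delta$ is positive semidefinite for some $\delta>0$, so the constant function $1_{\mathcal X}\in\mathcal H$. Data: points $X_1,\ldots,X_n\in\mathcal X$, times $T_i\in(0,\infty)$, indicators $I_i\in\{0,1\}$. Define $N_i(t)=\mathbb 1\{T_i\le t,\ I_i=0\}$, $R_i(t)=\mathbb 1\{T_i\ge t\}$, $S_n(f,t)=\frac1n\sum_{i=1}^nR_i(t)e^{f(X_i)}$, $P_n(f)=\frac1n\sum_{i=1}^nf(X_i)$, $\ell_n(f)=\frac1n\sum_{i=1}^n N_i(1)\log S_n(f,T_i)-\frac1n\sum_{i=1}^n f(X_i)N_i(1)$, and for $\gamma>0$ the penalised objective $\ell_{n,\gamma}(f)=\ell_n(f)+\gamma\|f-P_n(f)1_{\mathcal X}\|_{\mathcal H}^2+\gamma P_n(f)^2$ for $f\in\mathcal H$. *)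

(* Defs.v *)
From HB Require Import structures.
From mathcomp Require Import all_boot all_order all_algebra.
From mathcomp Require Import all_classical all_reals all_analysis.
Set Implicit Arguments. Unset Strict Implicit. Unset Printing Implicit Defensive.
Import Order.TTheory GRing.Theory Num.Theory.
Import numFieldNormedType.Exports.
Local Open Scope classical_set_scope.
Local Open Scope ring_scope.

Definition open_sets_sigma_compact (T : topologicalType) : Prop :=
  forall U : set T, open U ->
    exists K : nat -> set T, (forall m, compact (K m)) /\ U = \bigcup_m K m.

Definition psd_kernel (R : realType) (X : Type) (k : X -> X -> R) : Prop :=
  forall (m : nat) (x : 'I_m -> X) (c : 'I_m -> R),
    0 <= \sum_(i < m) \sum_(j < m) c i * c j * k (x i) (x j).

Definition symmetric_kernel (R : realType) (X : Type) (k : X -> X -> R) : Prop :=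
  forall x y, k x y = k y x.

(* H (a set of real functions on X) with inner product ip is the reproducing
   kernel Hilbert space of k: a real inner-product space of functions, complete
   for the induced norm, containing the sections k(.,x), with the reproducing
   property <f, k(.,x)> = f x.  (The RKHS is unique, so quantifying over all
   such (H, ip) is the same as speaking of "the" RKHS of k.) *)
Record is_RKHS (R : realType) (X : Type) (k : X -> X -> R)
    (H : set (X -> R)) (ip : (X -> R) -> (X -> R) -> R) : Prop := {
  rkhs_zero : H (fun _ => 0);
  rkhs_add : forall f g, H f -> H g -> H (fun x => f x + g x);
  rkhs_scale : forall (a : R) f, H f -> H (fun x => a * f x);
  rkhs_ip_sym : forall f g, H f -> H g -> ip f g = ip g f;
  rkhs_ip_linl : forall (a : R) f g h, H f -> H g -> H h ->
      ip (fun x => a * f x + g x) h = a * ip f h + ip g h;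
  rkhs_ip_pos : forall f, H f -> 0 <= ip f f;
  rkhs_ip_def : forall f, H f -> ip f f = 0 -> f = (fun _ => 0);
  rkhs_complete : forall u : nat -> (X -> R), (forall m, H (u m)) ->
      (forall e : R, 0 < e -> exists N, forall p q, (N <= p)%N -> (N <= q)%N ->
         ip (fun x => u p x - u q x) (fun x => u p x - u q x) < e) ->
      exists f, H f /\ (forall e : R, 0 < e -> exists N, forall p, (N <= p)%N ->
         ip (fun x => u p x - f x) (fun x => u p x - f x) < e);
  rkhs_kmem : forall y, H (fun x => k x y);
  rkhs_reproducing : forall f y, H f -> ip f (fun x => k x y) = f y
}.

Section Cox.
Variables (R : realType) (X : Type) (n : nat) (Xs : 'I_n -> X)
  (T : 'I_n -> R) (I : 'I_n -> bool).
(* I i = true encodes I_i = 1, I i = false encodes I_i = 0. *)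

Definition Ncount (i : 'I_n) (t : R) : R := (((T i <= t)%R && ~~ I i) : nat)%:R.
Definition Rrisk (i : 'I_n) (t : R) : R := (((t <= T i)%R) : nat)%:R.
Definition Sn (f : X -> R) (t : R) : R :=
  n%:R^-1 * \sum_(i < n) Rrisk i t * expR (f (Xs i)).
Definition Pn (f : X -> R) : R := n%:R^-1 * \sum_(i < n) f (Xs i).
Definition ell_n (f : X -> R) : R :=
  n%:R^-1 * \sum_(i < n) Ncount i 1 * ln (Sn f (T i))
  - n%:R^-1 * \sum_(i < n) f (Xs i) * Ncount i 1.
(* penalised objective; ip is the RKHS inner product, ||g||^2 = ip g g *)
Definition ell_pen (ip : (X -> R) -> (X -> R) -> R) (gamma : R) (f : X -> R) : R :=
  ell_n f
  + gamma * ip (fun x => f x - Pn f * 1) (fun x => f x - Pn f * 1)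
  + gamma * Pn f ^+ 2.

Definition kbar (k : X -> X -> R) (y : X) : R := n%:R^-1 * \sum_(i < n) k (Xs i) y.
Definition ktilde (k : X -> X -> R) (x y : X) : R := k x y - kbar k y.

(* Linear independence in R^{n+1} of the family consisting of
   v0 = (||1||^2, 1, ..., 1) and v_i = (1, k(X_i,X_1), ..., k(X_i,X_n)), i in A,
   written coordinatewise: the only vanishing linear combination is trivial. *)
Definition indep_family (k : X -> X -> R) (norm1sq : R) (A : {set 'I_n}) : Prop :=
  forall (c0 : R) (c : 'I_n -> R),
    c0 * norm1sq + \sum_(i in A) c i * 1 = 0 ->
    (forall j : 'I_n, c0 * 1 + \sum_(i in A) c i * k (Xs i) (Xs j) = 0) ->
    c0 = 0 /\ (forall i, i \in A -> c i = 0).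

Definition maximal_indep (k : X -> X -> R) (norm1sq : R) (A : {set 'I_n}) : Prop :=
  indep_family k norm1sq A /\
  (forall B : {set 'I_n}, A \proper B -> ~ indep_family k norm1sq B).

Definition f_beta (k : X -> X -> R) (A : {set 'I_n})
    (beta : {i : 'I_n | i \in A} -> R) : X -> R :=
  fun x => \sum_(i : {i : 'I_n | i \in A}) ktilde k x (Xs (val i)) * beta i.
End Cox.

Definition strongly_convex (R : realType) (I : finType) (F : (I -> R) -> R) : Prop :=
  exists m : R, 0 < m /\
    forall (b1 b2 : I -> R) (t : R), 0 <= t -> t <= 1 ->
      F (fun i => t * b1 i + (1 - t) * b2 i)
      <= t * F b1 + (1 - t) * F b2
         - m / 2 * t * (1 - t) * \sum_i (b1 i - b2 i) ^+ 2.

(* Main.v *)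
Require Import Defs.
From HB Require Import structures.
From mathcomp Require Import all_boot all_order all_algebra.
From mathcomp Require Import all_classical all_reals all_analysis.
From mathcomp Require Import ring lra.
Import Order.TTheory GRing.Theory Num.Theory.
Import numFieldNormedType.Exports.
Local Open Scope classical_set_scope.
Local Open Scope ring_scope.
Set Implicit Arguments. Unset Strict Implicit. Unset Printing Implicit Defensive.


Section IP.
Variables (R : realType) (X : Type) (k : X -> X -> R) (H : set (X -> R))
  (ip : (X -> R) -> (X -> R) -> R).
Hypothesis hH : is_RKHS k H ip.

Lemma H_lin (a b : R) f g : H f -> H g -> H (fun x => a * f x + b * g x).
Proof.
move=> hf hg; apply: (rkhs_add hH); exact: (rkhs_scale hH).
Qed.

Lemma H_scale (a : R) f : H f -> H (fun x => a * f x).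
Proof. exact: (rkhs_scale hH). Qed.

Lemma H_sub f g : H f -> H g -> H (fun x => f x - g x).
Proof.
move=> hf hg; have := H_lin 1 (-1) hf hg.
have -> : (fun x => 1 * f x + -1 * g x) = (fun x => f x - g x).
  by apply: funext => x; rewrite mul1r mulN1r.
done.
Qed.

Lemma ip_addl f g h : H f -> H g -> H h ->
  ip (fun x => f x + g x) h = ip f h + ip g h.
Proof.
move=> hf hg hh; have := rkhs_ip_linl hH 1 hf hg hh.
have -> : (fun x => 1 * f x + g x) = (fun x => f x + g x).
  by apply: funext => x; rewrite mul1r.
by rewrite mul1r.
Qed.

Lemma ip0l h : H h -> ip (fun _ => 0) h = 0.
Proof.
move=> hh; have := ip_addl (rkhs_zero hH) (rkhs_zero hH) hh.
have -> : (fun _ : X => (0:R) + 0) = (fun _ => 0) by apply: funext => x; rewrite addr0.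
move=> E; have : ip (fun _ => 0) h - ip (fun _ => 0) h = ip (fun _ => 0) h by rewrite {1}E addrK.
by rewrite subrr => <-.
Qed.

Lemma ip_scalel (a : R) f h : H f -> H h -> ip (fun x => a * f x) h = a * ip f h.
Proof.
move=> hf hh; have := rkhs_ip_linl hH a hf (rkhs_zero hH) hh.
have -> : (fun x => a * f x + 0) = (fun x => a * f x) by apply: funext => x; rewrite addr0.
by rewrite ip0l // addr0.
Qed.

Lemma ip_sym f g : H f -> H g -> ip f g = ip g f.
Proof. exact: (rkhs_ip_sym hH). Qed.

Lemma ip0r h : H h -> ip h (fun _ => 0) = 0.
Proof. move=> hh; rewrite ip_sym //; [exact: ip0l | exact: (rkhs_zero hH)]. Qed.

Lemma H_sum (J : Type) (r : seq J) (P : pred J) (c : J -> R) (g : J -> X -> R) :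
  (forall j, H (g j)) -> H (fun x => \sum_(j <- r | P j) c j * g j x).
Proof.
move=> hg; elim: r => [|j r IH].
  have -> : (fun x => \sum_(j <- [::] | P j) c j * g j x) = (fun _ => 0).
    by apply: funext => x; rewrite big_nil.
  exact: (rkhs_zero hH).
case Pj: (P j).
  have -> : (fun x => \sum_(i <- j :: r | P i) c i * g i x) =
     (fun x => c j * g j x + \sum_(i <- r | P i) c i * g i x).
    by apply: funext => x; rewrite big_cons Pj.
  apply: (rkhs_add hH) => //; exact: H_scale.
have -> : (fun x => \sum_(i <- j :: r | P i) c i * g i x) =
     (fun x => \sum_(i <- r | P i) c i * g i x).
  by apply: funext => x; rewrite big_cons Pj.
exact: IH.
Qed.

Lemma ip_suml (J : Type) (r : seq J) (P : pred J) (c : J -> R) (g : J -> X -> R) h :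
  (forall j, H (g j)) -> H h ->
  ip (fun x => \sum_(j <- r | P j) c j * g j x) h = \sum_(j <- r | P j) c j * ip (g j) h.
Proof.
move=> hg hh; elim: r => [|j r IH].
  have -> : (fun x => \sum_(j <- [::] | P j) c j * g j x) = (fun _ => 0).
    by apply: funext => x; rewrite big_nil.
  by rewrite big_nil ip0l.
case Pj: (P j).
  have -> : (fun x => \sum_(i <- j :: r | P i) c i * g i x) =
     (fun x => c j * g j x + \sum_(i <- r | P i) c i * g i x).
    by apply: funext => x; rewrite big_cons Pj.
  by rewrite (rkhs_ip_linl hH) // ?IH ?big_cons ?Pj //; exact: H_sum.
have -> : (fun x => \sum_(i <- j :: r | P i) c i * g i x) =
     (fun x => \sum_(i <- r | P i) c i * g i x).
  by apply: funext => x; rewrite big_cons Pj.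
by rewrite IH big_cons Pj.
Qed.

Lemma ip_sumr (J : Type) (r : seq J) (P : pred J) (c : J -> R) (g : J -> X -> R) h :
  (forall j, H (g j)) -> H h ->
  ip h (fun x => \sum_(j <- r | P j) c j * g j x) = \sum_(j <- r | P j) c j * ip h (g j).
Proof.
move=> hg hh; rewrite ip_sym //; last exact: H_sum.
rewrite ip_suml //; apply: eq_bigr => j _; rewrite ip_sym //.
Qed.

Lemma ip_subl f g h : H f -> H g -> H h ->
  ip (fun x => f x - g x) h = ip f h - ip g h.
Proof.
move=> hf hg hh; have := rkhs_ip_linl hH (-1) hg hf hh.
have -> : (fun x => -1 * g x + f x) = (fun x => f x - g x).
  by apply: funext => x; rewrite mulN1r addrC.
by move=> ->; rewrite mulN1r addrC.
Qed.

Lemma ip_subr f g h : H f -> H g -> H h ->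
  ip h (fun x => f x - g x) = ip h f - ip h g.
Proof.
move=> hf hg hh; rewrite ip_sym //; last exact: H_sub.
by rewrite ip_subl // (ip_sym hf) // (ip_sym hg).
Qed.

Lemma ip_addr f g h : H f -> H g -> H h ->
  ip h (fun x => f x + g x) = ip h f + ip h g.
Proof.
move=> hf hg hh; rewrite ip_sym // ?ip_addl // ?(ip_sym hf) ?(ip_sym hg) //.
exact: (rkhs_add hH).
Qed.

Lemma ip_scaler (a : R) f h : H f -> H h -> ip h (fun x => a * f x) = a * ip h f.
Proof.
move=> hf hh; rewrite ip_sym ?ip_scalel ?(ip_sym hf) //; exact: H_scale.
Qed.

Lemma H_add f g : H f -> H g -> H (fun x => f x + g x).
Proof. exact: (rkhs_add hH). Qed.

Lemma ip_ge0 f : H f -> 0 <= ip f f.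
Proof. exact: (rkhs_ip_pos hH). Qed.

Lemma ip_eq0 f : H f -> ip f f = 0 -> forall x, f x = 0.
Proof. by move=> hf h0 x; rewrite (rkhs_ip_def hH hf h0). Qed.

Lemma ip_repr f y : H f -> ip f (fun x => k x y) = f y.
Proof. exact: (rkhs_reproducing hH). Qed.

Lemma H_k y : H (fun x => k x y).
Proof. exact: (rkhs_kmem hH). Qed.

Lemma ip_cs f g : H f -> H g -> ip f g ^+ 2 <= ip f f * ip g g.
Proof.
move=> hf hg.
have key : forall t : R, 0 <= ip f f - 2 * t * ip f g + t ^+ 2 * ip g g.
  move=> t; have hfg := H_sub hf (H_scale t hg).
  have := ip_ge0 hfg.
  rewrite ip_subl ?ip_subr ?ip_scalel ?ip_scaler //; try exact: H_scale.
  rewrite (ip_sym hg hf); set a := ip f f; set b := ip f g; set c := ip g g.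
  move=> h; suff -> : a - 2 * t * b + t ^+ 2 * c = a - t * b - (t * b - t * (t * c)) by [].
  by ring.
have a0 := ip_ge0 hf; have c0 := ip_ge0 hg.
set a := ip f f in key a0 *; set b := ip f g in key *; set c := ip g g in key c0 *.
have [c_eq0|c_gt0] := eqVneq c 0.
  rewrite c_eq0 mulr0.
  have hb : b = 0.
    apply/eqP; apply/negPn/negP => bn0.
    have := key ((a + 1) / (2 * b)); rewrite c_eq0 mulr0 addr0.
    have -> : 2 * ((a + 1) / (2 * b)) * b = a + 1.
      by field; exact: bn0.
    lra.
  by rewrite hb expr0n.
have cpos : 0 < c by rewrite lt_neqAle eq_sym c_gt0 c0.
have := key (b / c).
have -> : a - 2 * (b / c) * b + (b / c) ^+ 2 * c = a - b ^+ 2 / c.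
  by field.
rewrite subr_ge0 ler_pdivrMr //.
Qed.

End IP.


Section Gram.
Variables (R : realType) (X : Type) (k : X -> X -> R) (H : set (X -> R))
  (ip : (X -> R) -> (X -> R) -> R).
Hypothesis hH : is_RKHS k H ip.
Variables (m : nat) (V : pred 'I_m) (g : 'I_m -> X -> R).
Hypothesis hg : forall a, H (g a).
Hypothesis indep : forall v : 'I_m -> R,
  (forall x, \sum_(a | V a) v a * g a x = 0) -> forall a, V a -> v a = 0.

Definition Gm : 'M[R]_m := \matrix_(a, b) if V a && V b then ip (g a) (g b) else (a == b)%:R.
Definition Gs (v : 'I_m -> R) := fun x => \sum_(a | V a) v a * g a x.

Lemma H_Gs v : H (Gs v).
Proof. by rewrite /Gs; apply: (H_sum hH). Qed.

Lemma mulG_V (v : 'rV[R]_m) b : V b -> (v *m Gm) 0 b = ip (Gs (v 0)) (g b).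
Proof.
move=> Vb; rewrite mxE /Gs (ip_suml hH) // (bigID V) /=.
rewrite [X in _ + X]big1 ?addr0; last first.
  by move=> a /negbTE Va; rewrite mxE Va /=; case: eqP => [E|]; [rewrite -E Va in Vb | rewrite mulr0].
by apply: eq_bigr => a Va; rewrite mxE Va Vb.
Qed.

Lemma mulG_nV (v : 'rV[R]_m) b : ~~ V b -> (v *m Gm) 0 b = v 0 b.
Proof.
move=> /negbTE Vb; rewrite mxE (bigD1 b) //= big1 ?addr0; last first.
  by move=> a ab; rewrite mxE Vb andbF (negbTE ab) mulr0.
by rewrite mxE Vb andbF eqxx mulr1.
Qed.

Lemma Gm_free : row_free Gm.
Proof.
apply: inj_row_free => v hv.
have hV : forall b, V b -> ip (Gs (v 0)) (g b) = 0.
  by move=> b Vb; rewrite -mulG_V // hv mxE.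
have hQ : ip (Gs (v 0)) (Gs (v 0)) = 0.
  rewrite {2}/Gs (ip_sumr hH) //; last exact: H_Gs.
  by apply: big1 => b Vb; rewrite hV // mulr0.
have h0 := ip_eq0 hH (H_Gs _) hQ.
have hz := indep h0.
apply/rowP => b; rewrite mxE.
case Vb: (V b); first exact: hz.
by rewrite -mulG_nV ?Vb // hv mxE.
Qed.

Lemma Gm_unit : Gm \in unitmx.
Proof. by rewrite -row_free_unit Gm_free. Qed.

Lemma Gs_solve f : H f -> exists w, forall b, V b -> ip (Gs w) (g b) = ip f (g b).
Proof.
move=> hf; pose z : 'rV[R]_m := \row_b (if V b then ip f (g b) else 0).
pose v := z *m invmx Gm.
exists (v 0) => b Vb.
by rewrite -mulG_V // /v mulmxKV ?Gm_unit // mxE Vb.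
Qed.

Lemma Gs_bound : exists C : R, 0 <= C /\ forall w : 'I_m -> R,
  \sum_(a | V a) w a ^+ 2 <= C * ip (Gs w) (Gs w).
Proof.
pose M' := invmx Gm.
pose ka b := Num.sqrt (ip (g b) (g b)).
pose c a := \sum_b ka b * `|M' b a|.
have c0 : forall a, 0 <= c a.
  by move=> a; apply: sumr_ge0 => b _; rewrite mulr_ge0 ?sqrtr_ge0.
exists (\sum_a c a ^+ 2); split; first by apply: sumr_ge0 => a _; rewrite sqr_ge0.
move=> w; pose v : 'rV[R]_m := \row_a (if V a then w a else 0).
have GE : Gs (v 0) = Gs w.
  by apply: funext => x; apply: eq_bigr => a Va; rewrite mxE Va.
set Q := ip (Gs w) (Gs w).
have Q0 : 0 <= Q by exact: (ip_ge0 hH (H_Gs _)).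
pose y := v *m Gm.
have hy : forall b, `|y 0 b| <= Num.sqrt Q * ka b.
  move=> b; case Vb: (V b).
    rewrite /y mulG_V // GE -sqrtr_sqr -sqrtrM //.
    by apply: ler_wsqrtr; exact: (ip_cs hH (H_Gs _) (hg b)).
  by rewrite /y mulG_nV ?Vb // mxE Vb normr0 mulr_ge0 ?sqrtr_ge0.
have hv : forall a, `|v 0 a| <= Num.sqrt Q * c a.
  move=> a; have -> : v = y *m M' by rewrite /y /M' mulmxK ?Gm_unit.
  rewrite mxE (le_trans (ler_norm_sum _ _ _)) // /c mulr_sumr.
  apply: ler_sum => b _; rewrite normrM mulrA ler_wpM2r //.
have -> : \sum_(a | V a) w a ^+ 2 = \sum_a v 0 a ^+ 2.
  rewrite big_mkcond; apply: eq_bigr => a _; rewrite mxE; case: (V a) => //.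
  by rewrite expr0n.
rewrite mulrC mulr_sumr; apply: ler_sum => a _.
rewrite -real_normK ?num_real //.
have h1 := hv a; have h2 := normr_ge0 (v 0 a).
have h3 : Num.sqrt Q ^+ 2 = Q by rewrite sqr_sqrtr.
have h4 := sqrtr_ge0 Q.
rewrite -h3 -exprMn; apply: lerXn2r => //; rewrite ?nnegrE //.
by rewrite mulr_ge0.
Qed.

End Gram.


Lemma expR_conv (R : realType) (t u v : R) : 0 <= t -> t <= 1 ->
  expR (t * u + (1 - t) * v) <= t * expR u + (1 - t) * expR v.
Proof.
move=> t0 t1; have := @convex_expR R (Itv01 t0 t1) u v.
by rewrite /conv /=.
Qed.

Lemma seq_cauchy_cvg (R : realType) (u : nat -> R) :
  (forall e : R, 0 < e -> exists N, forall p q, (N <= p)%N -> (N <= q)%N -> `|u p - u q| < e) ->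
  cvgn u.
Proof.
move=> hu; apply/cauchy_cvgP/cauchy_ballP => e e0.
have [N hN] := hu e e0.
rewrite near_simpl. exists ([set p | (N <= p)%N], [set q | (N <= q)%N]).
  by split; exists N.
case=> p q [/= hp hq]; rewrite /ball /= distrC; exact: hN.
Qed.

Lemma cvg_sum_gen (R : realType) (J : Type) (r : seq J) (P : pred J)
  (u : nat -> J -> R) (l : J -> R) :
  (forall j, P j -> u^~ j @ \oo --> l j) ->
  (fun k => \sum_(j <- r | P j) u k j) @ \oo --> \sum_(j <- r | P j) l j.
Proof.
move=> hu; elim: r => [|j r IH].
  rewrite big_nil; under eq_fun do rewrite big_nil; exact: cvg_cst.
rewrite big_cons; under eq_fun do rewrite big_cons.
case: ifP => Pj; last exact: IH.
apply: cvgD => //; exact: hu.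
Qed.

Lemma cvg_expR_seq (R : realType) (u : nat -> R) (l : R) : u @ \oo --> l ->
  (fun k => expR (u k)) @ \oo --> expR l.
Proof. move=> hu; apply: (@continuous_cvg _ _ _ _ _ u expR l) => //; exact: continuous_expR. Qed.

Lemma cvg_ln_seq (R : realType) (u : nat -> R) (l : R) : 0 < l -> u @ \oo --> l ->
  (fun k => ln (u k)) @ \oo --> ln l.
Proof. move=> l0 hu; have hc := continuous_ln l0; exact: (@continuous_cvg _ _ _ _ _ u _ l hc hu). Qed.

Section Ell.
Variables (R : realType) (X : Type) (n : nat) (Xs : 'I_n -> X) (T : 'I_n -> R)
  (I : 'I_n -> bool).
Hypothesis hn : (0 < n)%N.

Local Notation N i := (Ncount T I i 1).
Local Notation S f t := (Sn Xs T f t).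

Lemma N_ge0 i : 0 <= N i.
Proof. by rewrite /Ncount ler0n. Qed.

Lemma Rr_ge0 i t : 0 <= Rrisk T i t.
Proof. by rewrite /Rrisk ler0n. Qed.

Lemma ninv_gt0 : 0 < (n%:R : R)^-1.
Proof. by rewrite invr_gt0 ltr0n. Qed.

Lemma Sn_ge f i : (n%:R)^-1 * expR (f (Xs i)) <= S f (T i).
Proof.
rewrite /Sn ler_wpM2l ?(ltW ninv_gt0) // (bigD1 i) //= /Rrisk lexx /= mul1r.
rewrite lerDl; apply: sumr_ge0 => j _; rewrite mulr_ge0 ?expR_ge0 //.
Qed.

Lemma Sn_pos f i : 0 < S f (T i).
Proof.
apply: lt_le_trans (Sn_ge f i); rewrite mulr_gt0 ?expR_gt0 //; exact: ninv_gt0.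
Qed.

Lemma ell_eq f : ell_n Xs T I f =
  (n%:R)^-1 * \sum_i (N i * ln (S f (T i)) - f (Xs i) * N i).
Proof. by rewrite /ell_n -mulrBr sumrB. Qed.

Lemma ell_shift f g c : (forall l, f (Xs l) = g (Xs l) + c) ->
  ell_n Xs T I f = ell_n Xs T I g.
Proof.
move=> hfg.
have SE : forall t, S f t = expR c * S g t.
  move=> t; rewrite /Sn [RHS]mulrCA; congr (_ * _); rewrite mulr_sumr.
  by apply: eq_bigr => l _; rewrite hfg expRD; ring.
have LE : forall i, ln (S f (T i)) = c + ln (S g (T i)).
  by move=> i; rewrite SE lnM ?posrE ?expR_gt0 ?Sn_pos // expRK.
rewrite !ell_eq; congr (_ * _); apply: eq_bigr => i _; rewrite LE hfg; ring.
Qed.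

Lemma lnS_conv f g h (t : R) i : 0 <= t -> t <= 1 ->
  (forall l, h (Xs l) = t * f (Xs l) + (1 - t) * g (Xs l)) ->
  ln (S h (T i)) <= t * ln (S f (T i)) + (1 - t) * ln (S g (T i)).
Proof.
move=> t0 t1 hh.
set Sf := S f (T i); set Sg := S g (T i).
have Sf0 : 0 < Sf by exact: Sn_pos.
have Sg0 : 0 < Sg by exact: Sn_pos.
set a := ln Sf; set b := ln Sg.
have ea : expR a = Sf by rewrite /a lnK ?posrE.
have eb : expR b = Sg by rewrite /b lnK ?posrE.
set E := expR (t * a + (1 - t) * b).
have E0 : 0 < E by exact: expR_gt0.
have term : forall l, expR (h (Xs l)) <=
    E * (t * expR (f (Xs l)) / Sf + (1 - t) * expR (g (Xs l)) / Sg).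
  move=> l; rewrite hh.
  have -> : t * f (Xs l) + (1 - t) * g (Xs l) =
     (t * a + (1 - t) * b) + (t * (f (Xs l) - a) + (1 - t) * (g (Xs l) - b)) by ring.
  rewrite expRD ler_wpM2l ?(ltW E0) //.
  apply: le_trans (expR_conv _ _ t0 t1) _.
  rewrite !expRD !expRN ea eb !mulrA.
  by rewrite le_eqVlt; apply/orP; left; apply/eqP.
have hS : S h (T i) <= E.
  apply: (@le_trans _ _ ((n%:R)^-1 * \sum_l Rrisk T l (T i) *
      (E * (t * expR (f (Xs l)) / Sf + (1 - t) * expR (g (Xs l)) / Sg)))).
    rewrite /Sn ler_wpM2l ?(ltW ninv_gt0) //; apply: ler_sum => l _.
    by rewrite ler_wpM2l ?Rr_ge0 ?term.
  have -> : (n%:R)^-1 * \sum_l Rrisk T l (T i) *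
      (E * (t * expR (f (Xs l)) / Sf + (1 - t) * expR (g (Xs l)) / Sg)) =
      E * t / Sf * S f (T i) + E * (1 - t) / Sg * S g (T i).
    rewrite [in RHS]/Sn.
    have -> : \sum_l Rrisk T l (T i) *
      (E * (t * expR (f (Xs l)) / Sf + (1 - t) * expR (g (Xs l)) / Sg)) =
      \sum_l (E * t / Sf * (Rrisk T l (T i) * expR (f (Xs l))) +
              E * (1 - t) / Sg * (Rrisk T l (T i) * expR (g (Xs l)))).
      by apply: eq_bigr => l _; ring.
    rewrite big_split /= -!mulr_sumr; ring.
  rewrite -/Sf -/Sg.
  rewrite -!mulrA !mulVf ?gt_eqF // !mulr1.
  by rewrite le_eqVlt; apply/orP; left; apply/eqP; ring.
rewrite -(expRK (t * a + (1 - t) * b)) -/E ler_ln ?posrE //.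
exact: Sn_pos.
Qed.

Lemma ell_conv f g h (t : R) : 0 <= t -> t <= 1 ->
  (forall l, h (Xs l) = t * f (Xs l) + (1 - t) * g (Xs l)) ->
  ell_n Xs T I h <= t * ell_n Xs T I f + (1 - t) * ell_n Xs T I g.
Proof.
move=> t0 t1 hh; rewrite !ell_eq.
have -> : t * ((n%:R)^-1 * \sum_i (N i * ln (S f (T i)) - f (Xs i) * N i)) +
   (1 - t) * ((n%:R)^-1 * \sum_i (N i * ln (S g (T i)) - g (Xs i) * N i)) =
   (n%:R)^-1 * \sum_i (t * (N i * ln (S f (T i)) - f (Xs i) * N i) +
                     (1 - t) * (N i * ln (S g (T i)) - g (Xs i) * N i)).
  by rewrite [in RHS]big_split /= -2![in RHS]mulr_sumr; ring.
rewrite ler_wpM2l ?(ltW ninv_gt0) //; apply: ler_sum => i _.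
have hl := lnS_conv i t0 t1 hh.
rewrite -subr_ge0.
have -> : t * (N i * ln (S f (T i)) - f (Xs i) * N i) +
   (1 - t) * (N i * ln (S g (T i)) - g (Xs i) * N i) -
   (N i * ln (S h (T i)) - h (Xs i) * N i) =
   N i * (t * ln (S f (T i)) + (1 - t) * ln (S g (T i)) - ln (S h (T i))) by rewrite hh; ring.
by rewrite mulr_ge0 ?N_ge0 // subr_ge0.
Qed.

Lemma ell_lb f : (n%:R)^-1 * \sum_i (- (N i * ln (n%:R : R))) <= ell_n Xs T I f.
Proof.
rewrite ell_eq ler_wpM2l ?(ltW ninv_gt0) //; apply: ler_sum => i _.
have hl : - ln (n%:R : R) + f (Xs i) <= ln (S f (T i)).
  have := Sn_ge f i; rewrite -ler_ln ?posrE ?Sn_pos ?mulr_gt0 ?expR_gt0 ?ninv_gt0 //.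
  by rewrite lnM ?posrE ?expR_gt0 ?ninv_gt0 // lnV ?posrE ?ltr0n // expRK.
rewrite -subr_ge0.
have -> : N i * ln (S f (T i)) - f (Xs i) * N i - - (N i * ln (n%:R : R)) =
   N i * (ln (S f (T i)) - (- ln (n%:R : R) + f (Xs i))) by ring.
by rewrite mulr_ge0 ?N_ge0 // subr_ge0.
Qed.

End Ell.



Section Main.
Variables (R : realType) (X : Type) (k : X -> X -> R) (H : set (X -> R))
  (ip : (X -> R) -> (X -> R) -> R).
Hypothesis hH : is_RKHS k H ip.
Hypothesis ksym : symmetric_kernel k.
Hypothesis h1 : H (fun _ => 1).
Variables (n : nat) (Xs : 'I_n -> X) (T : 'I_n -> R) (I : 'I_n -> bool).
Hypothesis hn : (0 < n)%N.
Variable (A : {set 'I_n}).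
Hypothesis hA : maximal_indep Xs k (ip (fun _ => 1) (fun _ => 1)) A.
Variable gamma : R.
Hypothesis hgamma : 0 < gamma.

Let one : X -> R := fun _ => 1.
Let kk (i : 'I_n) : X -> R := fun x => k x (Xs i).
Let kt (i : 'I_n) : X -> R := fun x => ktilde Xs k x (Xs i).
Let kb (i : 'I_n) : R := kbar Xs k (Xs i).
Local Notation J := {i : 'I_n | i \in A}.

Lemma kt_eq i : kt i = fun x => kk i x - kb i * one x.
Proof. by apply: funext => x; rewrite /kt /ktilde /one mulr1. Qed.

Lemma H_kk i : H (kk i).
Proof. exact: (H_k hH). Qed.

Lemma H_kt i : H (kt i).
Proof. rewrite kt_eq; apply: (H_sub hH) (H_kk i) _; exact: (H_scale hH). Qed.

Lemma ip_kk_one i : ip (kk i) one = 1.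
Proof. rewrite (ip_sym hH (H_kk i) h1) /kk /one; exact: (ip_repr hH (Xs i) h1). Qed.

Lemma ip_r_kt r i : H r -> ip r (kt i) = ip r (kk i) - kb i * ip r one.
Proof.
move=> hr; rewrite kt_eq (ip_subr hH (H_kk i) (H_scale hH (kb i) h1) hr).
by rewrite (ip_scaler hH (kb i) h1 hr).
Qed.

Definition ext (b : J -> R) (i : 'I_n) : R := if insub i is Some j then b j else 0.

Lemma ext_val b (j : J) : ext b (val j) = b j.
Proof. by rewrite /ext valK. Qed.

Lemma sumJ (F : 'I_n -> R) : \sum_(j : J) F (val j) = \sum_(i in A) F i.
Proof. rewrite (big_sub A); exact: erefl. Qed.

Lemma fb_ext (b : J -> R) x : f_beta Xs k b x = \sum_(i in A) ext b i * kt i x.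
Proof.
rewrite -sumJ /f_beta; apply: eq_bigr => j _; by rewrite ext_val mulrC.
Qed.

Lemma fb_fun (b : J -> R) : f_beta Xs k b = fun x => \sum_(i in A) ext b i * kt i x.
Proof. by apply: funext => x; rewrite fb_ext. Qed.

Lemma H_fb (b : J -> R) : H (f_beta Xs k b).
Proof. rewrite fb_fun; apply: (H_sum hH) => i; exact: H_kt. Qed.

Definition V0 (a : 'I_n.+1) : bool := if unlift ord0 a is Some i then i \in A else true.
Definition g0 (a : 'I_n.+1) : X -> R := if unlift ord0 a is Some i then kt i else one.

Lemma hg0 a : H (g0 a).
Proof. by rewrite /g0; case: (unlift _ _) => [i|]; [exact: H_kt | exact: h1]. Qed.

Lemma sum_V0 (F : 'I_n.+1 -> R) :
  \sum_(a | V0 a) F a = F ord0 + \sum_(i in A) F (lift ord0 i).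
Proof.
rewrite big_mkcond big_ord_recl /V0 unlift_none /=; congr (_ + _).
by rewrite [RHS]big_mkcond; apply: eq_bigr => i _; rewrite liftK.
Qed.

Lemma Gs_eq (w : 'I_n.+1 -> R) x :
  Gs V0 g0 w x = w ord0 * 1 + \sum_(i in A) w (lift ord0 i) * kt i x.
Proof.
rewrite /Gs sum_V0 /g0 unlift_none; congr (_ + _).
by apply: eq_bigr => i _; rewrite liftK.
Qed.

Lemma indepA (c0 : R) (w : 'I_n -> R) :
  (forall x, c0 + \sum_(i in A) w i * kt i x = 0) ->
  c0 = 0 /\ (forall i, i \in A -> w i = 0).
Proof.
move=> hz; set C := c0 - \sum_(i in A) w i * kb i.
have hz2 : forall x, C * one x + \sum_(i in A) w i * kk i x = 0.
  move=> x; rewrite -[RHS](hz x) /C /one mulr1.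
  have -> : \sum_(i in A) w i * kt i x =
     \sum_(i in A) w i * kk i x - \sum_(i in A) w i * kb i.
    by rewrite -sumrB; apply: eq_bigr => i _; rewrite /kt /ktilde mulrBr.
  ring.
case: hA => hind _.
have e1 : C * ip (fun _ => 1) (fun _ => 1) + \sum_(i in A) w i * 1 = 0.
  have U : (fun x => C * one x + \sum_(i in A) w i * kk i x) = (fun _ => 0).
    by apply: funext => x; rewrite hz2.
  have := ip0l hH h1; rewrite -U (ip_addl hH (H_scale hH C h1) (H_sum hH _ _ _ H_kk) h1).
  rewrite (ip_scalel hH C h1 h1) (ip_suml hH _ _ _ H_kk h1).
  by under eq_bigr do rewrite ip_kk_one.
have e2 : forall j, C * 1 + \sum_(i in A) w i * k (Xs i) (Xs j) = 0.
  move=> j; have := hz2 (Xs j); rewrite /one /kk.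
  by under eq_bigr do rewrite ksym.
have [C0 cw] := hind C w e1 e2.
split => //.
have : c0 = C + \sum_(i in A) w i * kb i by rewrite /C subrK.
by rewrite C0 add0r big1 // => i iA; rewrite cw // mul0r.
Qed.

Lemma indep0 (v : 'I_n.+1 -> R) :
  (forall x, \sum_(a | V0 a) v a * g0 a x = 0) -> forall a, V0 a -> v a = 0.
Proof.
move=> hv.
have hz : forall x, v ord0 + \sum_(i in A) v (lift ord0 i) * kt i x = 0.
  move=> x; rewrite -[RHS](hv x) sum_V0 /g0 unlift_none /one mulr1; congr (_ + _).
  by apply: eq_bigr => i _; rewrite liftK.
have [c00 cw] := indepA hz.
move=> a; case: (unliftP ord0 a) => [i ->|->] //.
by rewrite /V0 liftK => iA; exact: cw.
Qed.

Lemma orth_all r : H r -> ip r one = 0 -> (forall i, i \in A -> ip r (kk i) = 0) ->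
  forall j, ip r (kk j) = 0.
Proof.
move=> hr r1 rA j; case jA: (j \in A); first exact: rA.
apply/eqP; apply: contraT => hne; exfalso.
case: hA => hind hmax; apply: (hmax (j |: A)).
  by apply: properUr; rewrite finset.sub1set jA.
move=> c0 c hb1 hb2.
set B := j |: A in hb1 hb2 *.
pose u := fun x => c0 * one x + \sum_(i in B) c i * kk i x.
have Hu : H u by apply: (H_add hH); [exact: (H_scale hH c0 h1) | exact: (H_sum hH _ _ _ H_kk)].
have ipu1 : ip u one = 0.
  rewrite (ip_addl hH (H_scale hH c0 h1) (H_sum hH _ _ _ H_kk) h1).
  rewrite (ip_scalel hH c0 h1 h1) (ip_suml hH _ _ _ H_kk h1) -[RHS]hb1.
  by under eq_bigr do rewrite ip_kk_one.
have uX : forall l, u (Xs l) = 0.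
  move=> l; rewrite -[RHS](hb2 l) /u /one /kk; congr (_ + _).
  by apply: eq_bigr => i _; rewrite ksym.
have ipuu : ip u u = 0.
  rewrite {1}/u (ip_addl hH (H_scale hH c0 h1) (H_sum hH _ _ _ H_kk) Hu).
  rewrite (ip_scalel hH c0 h1 Hu) (ip_suml hH _ _ _ H_kk Hu).
  rewrite (ip_sym hH h1 Hu) ipu1 mulr0 add0r big1 // => i _.
  by rewrite (ip_sym hH (H_kk i) Hu) /kk (ip_repr hH (Xs i) Hu) uX mulr0.
have u0 := ip_eq0 hH Hu ipuu.
have ru : ip r u = 0.
  have -> : u = (fun _ => 0) by apply: funext => x; rewrite u0.
  exact: (ip0r hH hr).
move: ru; rewrite {1}/u (ip_addr hH (H_scale hH c0 h1) (H_sum hH _ _ _ H_kk) hr).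
rewrite (ip_scaler hH c0 h1 hr) (ip_sumr hH _ _ _ H_kk hr) r1 mulr0 add0r.
rewrite /B big_setU1 ?jA //= big1 ?addr0; last by move=> i iA; rewrite rA // mulr0.
move=> /eqP; rewrite mulf_eq0 (negbTE hne) orbF => /eqP cj0.
rewrite /B big_setU1 ?jA //= cj0 mul0r add0r in hb1.
have hb2' : forall l, c0 * 1 + \sum_(i in A) c i * k (Xs i) (Xs l) = 0.
  by move=> l; have := hb2 l; rewrite /B big_setU1 ?jA //= cj0 mul0r add0r.
have [-> cA] := hind c0 c hb1 hb2'; split => // i.
by rewrite in_setU1 => /orP[/eqP->|/cA].
Qed.

Lemma decomp f : H f -> exists (b : J -> R) (c : R),
  let r := fun x => f x - f_beta Xs k b x - c in
  H r /\ ip r one = 0 /\ forall j, ip r (kk j) = 0.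
Proof.
move=> hf.
have [w hw] := Gs_solve hH hg0 indep0 hf.
exists (fun j : J => w (lift ord0 (val j))), (w ord0) => r.
have re : r = fun x => f x - Gs V0 g0 w x.
  apply: funext => x; rewrite /r Gs_eq /f_beta -sumJ mulr1.
  have -> : \sum_(j : J) w (lift ord0 (val j)) * kt (val j) x =
            \sum_(j : J) ktilde Xs k x (Xs (val j)) * w (lift ord0 (val j)).
    by apply: eq_bigr => j _; rewrite mulrC.
  ring.
have hGs : H (Gs V0 g0 w) by exact: (H_Gs hH V0 hg0 w).
have Hr : H r by rewrite re; exact: (H_sub hH hf hGs).
have ro : forall a, V0 a -> ip r (g0 a) = 0.
  by move=> a Va; rewrite re (ip_subl hH hf hGs (hg0 a)) hw // subrr.
have r1 : ip r one = 0.
  by have := ro ord0; rewrite /V0 /g0 unlift_none; apply.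
split => //; split => //.
apply: orth_all => // i iA.
have := ro (lift ord0 i); rewrite /V0 /g0 liftK => /(_ iA).
by rewrite (ip_r_kt i Hr) r1 mulr0 subr0.
Qed.

Lemma Qbound : exists C : R, 0 <= C /\ forall b : J -> R,
  \sum_j b j ^+ 2 <= C * ip (f_beta Xs k b) (f_beta Xs k b).
Proof.
have [C [C0 hC]] := Gs_bound hH hg0 indep0.
exists C; split => // b.
pose w (a : 'I_n.+1) := if unlift ord0 a is Some i then ext b i else 0.
have := hC w.
have -> : Gs V0 g0 w = f_beta Xs k b.
  apply: funext => x; rewrite Gs_eq fb_ext /w unlift_none mul0r add0r.
  by apply: eq_bigr => i _; rewrite liftK.
rewrite sum_V0 /w unlift_none expr0n /= add0r.
have -> : \sum_(i in A) (if unlift ord0 (lift ord0 i) is Some i0 then ext b i0 else 0) ^+ 2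
   = \sum_(i in A) ext b i ^+ 2 by apply: eq_bigr => i _; rewrite liftK.
  rewrite -sumJ; suff -> : \sum_(j : J) ext b (val j) ^+ 2 = \sum_j b j ^+ 2 by []; by apply: eq_bigr => j _; rewrite ext_val.
Qed.

Local Notation fb b := (f_beta Xs k b).
Definition FF (b : J -> R) := ell_pen Xs T I ip gamma (fb b).

Lemma Pn_fb (b : J -> R) : Pn Xs (fb b) = 0.
Proof.
rewrite /Pn; apply/eqP; rewrite mulf_eq0; apply/orP; right; apply/eqP.
under eq_bigr do rewrite fb_ext.
rewrite exchange_big /=; apply: big1 => i _; rewrite -mulr_sumr.
suff -> : \sum_(l < n) kt i (Xs l) = 0 by rewrite mulr0.
rewrite /kt /ktilde sumrB sumr_const card_ord /kbar -mulr_natr.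
have n0 : (n%:R : R) != 0 by rewrite pnatr_eq0 -lt0n.
by field.
Qed.

Lemma H_zero : H (fun _ => 0).
Proof. exact: (rkhs_zero hH). Qed.

Lemma ip_fb_r (b : J -> R) r : H r -> ip r one = 0 -> (forall j, ip r (kk j) = 0) ->
  ip r (fb b) = 0.
Proof.
move=> hr r1 rk; rewrite fb_fun (ip_sumr hH _ _ _ H_kt hr).
by apply: big1 => i _; rewrite (ip_r_kt i hr) rk r1 mulr0 subr0 mulr0.
Qed.

Lemma pen_decomp (b : J -> R) c r : H r -> ip r one = 0 -> (forall j, ip r (kk j) = 0) ->
  forall g, (forall x, g x = fb b x + c + r x) ->
  ell_pen Xs T I ip gamma g =
    ell_n Xs T I (fb b) + gamma * (ip (fb b) (fb b) + ip r r + c ^+ 2).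
Proof.
move=> hr r1 rk g hg.
have rX : forall l, r (Xs l) = 0.
  by move=> l; rewrite -(ip_repr hH (Xs l) hr); exact: rk.
have gX : forall l, g (Xs l) = fb b (Xs l) + c by move=> l; rewrite hg rX addr0.
have Pg : Pn Xs g = c.
  have := Pn_fb b; rewrite /Pn => P0.
  under eq_bigr do rewrite gX.
  rewrite big_split /= mulrDr P0 add0r sumr_const card_ord -mulr_natr.
  have n0 : (n%:R : R) != 0 by rewrite pnatr_eq0 -lt0n.
  by field.
rewrite /ell_pen (ell_shift T I hn gX) Pg.
have -> : (fun x => g x - c * 1) = (fun x => fb b x + r x).
  by apply: funext => x; rewrite hg mulr1; ring.
have hfb := H_fb b.
have hs := H_add hH hfb hr.
rewrite (ip_addl hH hfb hr hs) (ip_addr hH hfb hr hfb) (ip_addr hH hfb hr hr).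
rewrite (ip_sym hH hfb hr) (ip_fb_r b hr r1 rk); ring.
Qed.

Lemma F_eq (b : J -> R) : FF b = ell_n Xs T I (fb b) + gamma * ip (fb b) (fb b).
Proof.
have E := @pen_decomp b 0 (fun _ => 0) H_zero (ip0l hH h1) (fun j => ip0l hH (H_kk j))
  (fb b) (fun x => etrans (esym (addr0 _)) (esym (addr0 _))).
by rewrite /FF E (ip0l hH H_zero) expr0n /= !addr0.
Qed.

Lemma fb_comb (b1 b2 : J -> R) (t s : R) :
  fb (fun i => t * b1 i + s * b2 i) = fun x => t * fb b1 x + s * fb b2 x.
Proof.
apply: funext => x; rewrite /f_beta !mulr_sumr -big_split; apply: eq_bigr => j _ /=; ring.
Qed.

Lemma fb_sub (b1 b2 : J -> R) :
  fb (fun i => b1 i - b2 i) = fun x => fb b1 x - fb b2 x.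
Proof.
apply: funext => x; rewrite /f_beta -sumrB; apply: eq_bigr => j _; ring.
Qed.

Lemma ip_comb f g (t s : R) : H f -> H g ->
  ip (fun x => t * f x + s * g x) (fun x => t * f x + s * g x) =
  t ^+ 2 * ip f f + 2 * t * s * ip f g + s ^+ 2 * ip g g.
Proof.
move=> hf hg; have htf := H_scale hH t hf; have hsg := H_scale hH s hg.
have hc := H_add hH htf hsg.
rewrite (ip_addl hH htf hsg hc) (ip_scalel hH t hf hc) (ip_scalel hH s hg hc).
rewrite (ip_addr hH htf hsg hf) (ip_addr hH htf hsg hg).
rewrite (ip_scaler hH t hf hf) (ip_scaler hH s hg hf).
rewrite (ip_scaler hH t hf hg) (ip_scaler hH s hg hg) (ip_sym hH hg hf); ring.
Qed.

Lemma ip_diff f g : H f -> H g ->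
  ip (fun x => f x - g x) (fun x => f x - g x) = ip f f - 2 * ip f g + ip g g.
Proof.
move=> hf hg; have := ip_comb 1 (-1) hf hg.
have -> : (fun x => 1 * f x + -1 * g x) = (fun x => f x - g x).
  by apply: funext => x; rewrite mul1r mulN1r.
move=> ->; ring.
Qed.

Lemma F_sc : exists m : R, 0 < m /\
  forall (b1 b2 : J -> R) (t : R), 0 <= t -> t <= 1 ->
    FF (fun i => t * b1 i + (1 - t) * b2 i)
    <= t * FF b1 + (1 - t) * FF b2
       - m / 2 * t * (1 - t) * \sum_i (b1 i - b2 i) ^+ 2.
Proof.
have [C [C0 hC]] := Qbound.
have C1 : 0 < C + 1 by lra.
exists (2 * gamma / (C + 1)); split; first by rewrite divr_gt0 ?mulr_gt0.
move=> b1 b2 t t0 t1.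
rewrite !F_eq.
have hf1 := H_fb b1; have hf2 := H_fb b2.
have hcomb : forall l, fb (fun i => t * b1 i + (1 - t) * b2 i) (Xs l) =
   t * fb b1 (Xs l) + (1 - t) * fb b2 (Xs l) by move=> l; rewrite fb_comb.
have he := @ell_conv _ _ _ Xs T I hn (fb b1) (fb b2) (fb (fun i => t * b1 i + (1 - t) * b2 i)) t t0 t1 hcomb.
rewrite fb_comb in he; rewrite fb_comb (ip_comb t (1 - t) hf1 hf2).
set d := \sum_i (b1 i - b2 i) ^+ 2.
have hd := hC (fun i => b1 i - b2 i).
rewrite fb_sub (ip_diff hf1 hf2) -/d in hd.
set Q1 := ip (fb b1) (fb b1) in hd *; set Q2 := ip (fb b2) (fb b2) in hd *.
set B := ip (fb b1) (fb b2) in hd *.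
have Qd0 : 0 <= Q1 - 2 * B + Q2.
  rewrite -(ip_diff hf1 hf2); apply: (ip_ge0 hH); exact: (H_sub hH hf1 hf2).
have hd2 : d / (C + 1) <= Q1 - 2 * B + Q2.
  rewrite ler_pdivrMr //; apply: le_trans hd _; rewrite mulrC ler_wpM2l //; lra.
have ts0 : 0 <= gamma * (t * (1 - t)) by rewrite mulr_ge0 ?mulr_ge0 ?(ltW hgamma) //; lra.
have k2 := ler_wpM2l ts0 hd2.
rewrite -subr_ge0.
set L1 := ell_n Xs T I (fb b1) in he *; set L2 := ell_n Xs T I (fb b2) in he *.
set Lc := ell_n Xs T I _ in he *.
have -> : t * (L1 + gamma * Q1) + (1 - t) * (L2 + gamma * Q2) -
   2 * gamma / (C + 1) / 2 * t * (1 - t) * d -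
   (Lc + gamma * (t ^+ 2 * Q1 + 2 * t * (1 - t) * B + (1 - t) ^+ 2 * Q2)) =
   (t * L1 + (1 - t) * L2 - Lc) +
   (gamma * (t * (1 - t)) * (Q1 - 2 * B + Q2) - gamma * (t * (1 - t)) * (d / (C + 1))).
  by field; rewrite gt_eqF.
by apply: addr_ge0; rewrite subr_ge0.
Qed.

Lemma F_uniq (b1 b2 : J -> R) : (forall b, FF b1 <= FF b) -> (forall b, FF b2 <= FF b) ->
  b1 = b2.
Proof.
move=> m1 m2; have [m [m0 hm]] := F_sc.
have h0 : 0 <= 1 / 2 :> R by lra.
have h12 : 1 / 2 <= 1 :> R by lra.
have hmid := hm b1 b2 (1/2) h0 h12.
have e12 : FF b1 = FF b2 by apply/eqP; rewrite eq_le m1 m2.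
have h := m1 (fun i => 1 / 2 * b1 i + (1 - 1 / 2) * b2 i).
set d := \sum_i _ in hmid.
set mid := FF _ in hmid h.
have d0 : 0 <= d by apply: sumr_ge0 => i _; rewrite sqr_ge0.
have dle : d <= 0.
  have : m * d <= 0 by rewrite -e12 in hmid; nra.
  by rewrite pmulr_rle0.
have d00 : d = 0 by apply/eqP; rewrite eq_le dle d0.
apply: funext => i; apply/eqP; rewrite -subr_eq0 -sqrf_eq0; apply/eqP.
move/eqP: d00; rewrite psumr_eq0 => [/allP/(_ i) |]; last by move=> j _; rewrite sqr_ge0.
by move=> /(_ (mem_index_enum i)) /implyP /(_ isT) /eqP.
Qed.

Lemma Q_eq (b : J -> R) : ip (fb b) (fb b) =
  \sum_(i in A) ext b i * \sum_(j in A) ext b j * ip (kt i) (kt j).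
Proof.
rewrite fb_fun (ip_suml hH _ _ _ H_kt (H_sum hH _ _ _ H_kt)).
by apply: eq_bigr => i _; rewrite (ip_sumr hH _ _ _ H_kt (H_kt i)).
Qed.

Local Notation N i := (Ncount T I i 1).

Definition Gx (w : 'I_n -> R) : R :=
  n%:R^-1 * \sum_i (N i * ln (n%:R^-1 * \sum_(l < n) Rrisk T l (T i) *
        expR (\sum_(a in A) w a * kt a (Xs l)))
     - (\sum_(a in A) w a * kt a (Xs i)) * N i)
  + gamma * \sum_(a in A) w a * \sum_(c in A) w c * ip (kt a) (kt c).

Lemma FF_Gx (b : J -> R) : FF b = Gx (ext b).
Proof. by rewrite F_eq Q_eq ell_eq /Sn fb_fun. Qed.

Lemma Gx_cont (ws : nat -> 'I_n -> R) (wl : 'I_n -> R) :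
  (forall a, ws^~ a @ \oo --> wl a) -> (fun p => Gx (ws p)) @ \oo --> Gx wl.
Proof.
move=> hw; rewrite /Gx.
have hlin : forall x, (fun p => \sum_(a in A) ws p a * kt a x) @ \oo -->
                      \sum_(a in A) wl a * kt a x.
  move=> x; apply: cvg_sum_gen => a _; apply: cvgM => //; exact: cvg_cst.
apply: cvgD.
  apply: cvgM; first exact: cvg_cst.
  apply: cvg_sum_gen => i _; apply: cvgB.
    apply: cvgM; first exact: cvg_cst.
    apply: cvg_ln_seq.
      have := Sn_pos Xs T hn (fun x => \sum_(a in A) wl a * kt a x) i.
      by rewrite /Sn.
    apply: cvgM; first exact: cvg_cst.
    apply: cvg_sum_gen => l _; apply: cvgM; first exact: cvg_cst.
    exact: cvg_expR_seq.
  apply: cvgM; [exact: hlin | exact: cvg_cst].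
apply: cvgM; first exact: cvg_cst.
apply: cvg_sum_gen => a _; apply: cvgM => //.
apply: cvg_sum_gen => c _; apply: cvgM => //; exact: cvg_cst.
Qed.

Lemma sq_le_sum (F : J -> R) (i : J) : F i ^+ 2 <= \sum_j F j ^+ 2.
Proof.
rewrite (bigD1 i) //= lerDl; apply: sumr_ge0 => j _; exact: sqr_ge0.
Qed.

Lemma F_exists : exists bh : J -> R, forall b, FF bh <= FF b.
Proof.
have [m [m0 hm]] := F_sc.
pose L := n%:R^-1 * \sum_i (- (N i * ln (n%:R : R))).
have FL : forall b, L <= FF b.
  move=> b; rewrite F_eq; apply: le_trans (ell_lb Xs T I hn (fb b)) _.
  rewrite lerDl mulr_ge0 ?(ltW hgamma) //; apply: (ip_ge0 hH); exact: H_fb.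
pose E := range FF.
have hinf : has_inf E.
  split; first by exists (FF (fun _ => 0)); exists (fun _ => 0).
  by exists L => y [b _ <-]; exact: FL.
pose s := inf E.
have sle : forall b, s <= FF b.
  by move=> b; apply: (ge_inf hinf.2); exists b.
have hk : forall p : nat, exists b, FF b < s + (p.+1%:R)^-1.
  move=> p; have [e [b _ <-] he] := @inf_adherent _ E (p.+1%:R)^-1 (ltac:(by rewrite invr_gt0 ltr0n)) hinf.
  by exists b.
have [bs hbs] := choice hk.
have hcd : forall p q i, m / 8 * (bs p i - bs q i) ^+ 2 <=
    ((p.+1%:R)^-1 + (q.+1%:R)^-1) / 2.
  move=> p q i.
  have h0 : 0 <= 1 / 2 :> R by lra.
  have h12 : 1 / 2 <= 1 :> R by lra.
  have hmid := hm (bs p) (bs q) (1/2) h0 h12.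
  have hs := sle (fun i => 1 / 2 * bs p i + (1 - 1 / 2) * bs q i).
  have hsq := sq_le_sum (fun j => bs p j - bs q j) i.
  set d := \sum_j _ in hmid hsq.
  have hp := hbs p; have hq := hbs q.
  have : m / 8 * d <= ((p.+1%:R)^-1 + (q.+1%:R)^-1) / 2.
    set mid := FF _ in hmid hs.
    have -> : m / 8 * d = m / 2 * (1 / 2) * (1 - 1 / 2) * d by field.
    set w := m / 2 * _ * _ * d in hmid *; set u := (p.+1%:R)^-1 in hp *; set v := (q.+1%:R)^-1 in hq *; lra.
  apply: le_trans; rewrite ler_wpM2l //; lra.
have hcv : forall i, cvgn (fun p => bs p i).
  move=> i; apply: seq_cauchy_cvg => e e0.
  pose N0 := Num.bound (8 / (m * e ^+ 2)).
  have hN0 : 8 / (m * e ^+ 2) < N0%:R.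
    by apply: archi_boundP; rewrite divr_ge0 ?mulr_ge0 ?ltW ?exprn_gt0.
  exists N0 => p q hp hq.
  have := hcd p q i.
  have ip0 : (p.+1%:R : R)^-1 <= (N0.+1%:R)^-1.
    by rewrite lef_pV2 ?posrE ?ltr0n // ler_nat ltnS.
  have iq0 : (q.+1%:R : R)^-1 <= (N0.+1%:R)^-1.
    by rewrite lef_pV2 ?posrE ?ltr0n // ler_nat ltnS.
  have iN : (N0.+1%:R : R)^-1 < m * e ^+ 2 / 8.
    rewrite -[X in X < _]div1r ltr_pdivrMr ?ltr0n // -ltr_pdivrMl ?mulr_gt0 ?exprn_gt0 //.
    rewrite mulr1 invf_div; apply: lt_trans hN0 _; rewrite ltr_nat //.
  move=> h.
  have hd2 : (bs p i - bs q i) ^+ 2 < e ^+ 2.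
    have : m / 8 * (bs p i - bs q i) ^+ 2 < m / 8 * e ^+ 2.
      apply: le_lt_trans h _.
      have -> : m / 8 * e ^+ 2 = m * e ^+ 2 / 8 by field.
      set u := (p.+1%:R)^-1 in ip0 *; set v := (q.+1%:R)^-1 in iq0 *; set z := (N0.+1%:R)^-1 in ip0 iq0 iN; set y := m * e ^+ 2 / 8 in iN *; lra.
    by rewrite ltr_pM2l ?divr_gt0.
  have na := normr_ge0 (bs p i - bs q i).
  have : `|bs p i - bs q i| ^+ 2 < e ^+ 2 by rewrite real_normK ?num_real.
  nra.
pose bst := fun i => limn (fun p => bs p i).
have hbst : forall i, (fun p => bs p i) @ \oo --> bst i by move=> i; exact: hcv i.
have hFc : (fun p => FF (bs p)) @ \oo --> FF bst.
  have -> : (fun p => FF (bs p)) = (fun p => Gx (ext (bs p))).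
    by apply: funext => p; rewrite FF_Gx.
  rewrite FF_Gx; apply: Gx_cont => a.
  rewrite /ext; case: insub => [j|]; [exact: hbst | exact: cvg_cst].
have Fs : FF bst <= s.
  apply/ler_addgt0Pr => e e0.
  have /cvgrPdist_lt/(_ (e / 2)) := hFc.
  case; first by rewrite divr_gt0.
  move=> N1 _ hN1.
  pose p := maxn N1 (Num.bound (2 / e)).
  have hp := hN1 p (leq_maxl _ _).
  have hb : 2 / e < (Num.bound (2 / e))%:R.
    by apply: archi_boundP; rewrite divr_ge0 // ltW.
  have hpi : (p.+1%:R : R)^-1 < e / 2.
    rewrite -[X in X < _]div1r ltr_pdivrMr ?ltr0n // -ltr_pdivrMl ?divr_gt0 //.
    rewrite mulr1 invf_div; apply: lt_trans hb _; rewrite ltr_nat ltnS leq_maxr //.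
  have hbp := hbs p.
  move: hp => /=; rewrite distrC => hp.
  have := ler_norm (FF bst - FF (bs p)); rewrite distrC => hn2.
  have : FF bst - FF (bs p) < e / 2.
    apply: le_lt_trans (ler_norm _) _; by rewrite distrC.
  set u := (p.+1%:R)^-1 in hbp hpi; lra.
by exists bst => b; apply: le_trans Fs (sle b).
Qed.

Lemma main_res : strongly_convex FF /\
  exists bh : J -> R,
    (forall b, FF bh <= FF b) /\
    (forall b', (forall b, FF b' <= FF b) -> b' = bh) /\
    H (fb bh) /\
    (forall f, H f -> ell_pen Xs T I ip gamma (fb bh) <= ell_pen Xs T I ip gamma f) /\
    (forall g, H g -> (forall f, H f -> ell_pen Xs T I ip gamma g
                                         <= ell_pen Xs T I ip gamma f) ->
       g = fb bh).
Proof.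
split; first exact: F_sc.
have [bh hbh] := F_exists.
have dec : forall f, H f -> exists (b : J -> R) (c : R) (r : X -> R),
    H r /\ ip r r >= 0 /\
    ell_pen Xs T I ip gamma f = FF b + gamma * (ip r r + c ^+ 2) /\
    (forall x, f x = fb b x + c + r x).
  move=> f hf; have [b [c]] := decomp hf; move=> /= [Hr [r1 rk]].
  exists b, c, (fun x => f x - fb b x - c); split => //; split; first exact: (ip_ge0 hH Hr).
  have hfx : forall x, f x = fb b x + c + (f x - fb b x - c) by move=> x; ring.
  split => //.
  by rewrite (pen_decomp Hr r1 rk hfx) F_eq; ring.
exists bh; split => //; split; first by move=> b' hb'; exact: F_uniq.
split; first exact: H_fb.
split.
  move=> f hf; have [b [c [r [Hr [r0 [he _]]]]]] := dec f hf.
  rewrite he -/(FF bh); apply: le_trans (hbh b) _.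
  rewrite lerDl mulr_ge0 ?(ltW hgamma) // addr_ge0 // sqr_ge0 //.
move=> g hg hmin; have [b [c [r [Hr [r0 [he hx]]]]]] := dec g hg.
have hle := hmin _ (H_fb bh); rewrite he -/(FF bh) in hle.
have hb := hbh b.
have c20 := sqr_ge0 c.
have hz : gamma * (ip r r + c ^+ 2) <= 0 by lra.
have hz2 : ip r r + c ^+ 2 <= 0 by rewrite pmulr_rle0 in hz.
have rr0 : ip r r = 0 by lra.
have c0 : c ^+ 2 = 0 by lra.
move/eqP: c0; rewrite sqrf_eq0 => /eqP c0.
have hbmin : forall b', FF b <= FF b'.
  move=> b'; apply: le_trans (hbh b'); have : gamma * (ip r r + c ^+ 2) >= 0.
    by rewrite mulr_ge0 ?(ltW hgamma) ?addr_ge0.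
  lra.
have ebh := F_uniq hbmin hbh.
apply: funext => x; rewrite hx (ip_eq0 hH Hr rr0) c0 ebh; ring.
Qed.

End Main.

Theorem proposition1 (R : realType) (X : pseudoMetricType R)
  (hX : hausdorff_space X) (lcX : locally_compact [set: X])
  (sX : open_sets_sigma_compact X)
  (k : X -> X -> R)
  (kcont : continuous (fun p : X * X => k p.1 p.2))
  (ksym : symmetric_kernel k) (kpsd : psd_kernel k)
  (delta : R) (hdelta : 0 < delta)
  (kdpsd : psd_kernel (fun x y => k x y - delta))
  (H : set (X -> R)) (ip : (X -> R) -> (X -> R) -> R)
  (hH : is_RKHS k H ip) (h1 : H (fun _ => 1))
  (n : nat) (hn : (0 < n)%N)
  (Xs : 'I_n -> X) (T : 'I_n -> R) (hT : forall i, 0 < T i) (I : 'I_n -> bool)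
  (gamma : R) (hgamma : 0 < gamma)
  (A : {set 'I_n})
  (hA : maximal_indep Xs k (ip (fun _ => 1) (fun _ => 1)) A) :
  let F := fun beta : {i : 'I_n | i \in A} -> R =>
             ell_pen Xs T I ip gamma (f_beta Xs k beta) in
  strongly_convex F /\
  exists betahat : {i : 'I_n | i \in A} -> R,
    (forall beta, F betahat <= F beta) /\
    (forall beta', (forall beta, F beta' <= F beta) -> beta' = betahat) /\
    H (f_beta Xs k betahat) /\
    (forall f, H f -> ell_pen Xs T I ip gamma (f_beta Xs k betahat)
                      <= ell_pen Xs T I ip gamma f) /\
    (forall g, H g -> (forall f, H f -> ell_pen Xs T I ip gamma g
                                         <= ell_pen Xs T I ip gamma f) ->
       g = f_beta Xs k betahat).
Proof.
move=> F; exact: (main_res hH ksym h1 T I hn hA hgamma).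
Qed.
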